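(* Define $U_0=\{x\mapsto ax+b : a\in\mathbb{R}_+,\ b\in\mathbb{R}\}$, $U_{n+1}=\{x\mapsto a\,\mathrm{LReLU}_\beta(f(x))+b : a,\beta\in\mathbb{R}_+,\ b\in\mathbb{R},\ f\in U_n\}$ for $n\ge 0$, and $U=\bigcup_{n\ge0}U_n$ (functions $\mathbb{R}\to\mathbb{R}$). Then for every continuous non-decreasing function $\sigma:\mathbb{R}\to\mathbb{R}$, every compact $K\subset\mathbb{R}$ and every $\epsilon>0$, there exists $g\in U$ with $\sup_{x\in K}|\sigma(x)-g(x)|<\epsilon$.
   Context: $\mathbb{R}_+$ denotes the positive reals. For $\beta\in\mathbb{R}$, $\mathrm{LReLU}_\beta(x)=x$ if $x\ge 0$ and $\beta x$ if $x<0$. *)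

(* Defs.v *)
From HB Require Import structures.
From mathcomp Require Import all_boot all_order all_algebra.
From mathcomp Require Import all_classical all_reals all_analysis.
Set Implicit Arguments. Unset Strict Implicit. Unset Printing Implicit Defensive.
Import Order.TTheory GRing.Theory Num.Theory.
Import numFieldNormedType.Exports.
Local Open Scope ring_scope.
Local Open Scope classical_set_scope.

Definition LReLU (R : realType) (beta x : R) : R :=
  if 0 <= x then x else beta * x.

Inductive U_n (R : realType) : nat -> (R -> R) -> Prop :=
| U_n0 (a b : R) : 0 < a -> U_n 0 (fun x => a * x + b)
| U_nS (n : nat) (a beta b : R) (f : R -> R) :
    0 < a -> 0 < beta -> U_n n f ->
    U_n n.+1 (fun x => a * LReLU beta (f x) + b).

Definition U_all (R : realType) (g : R -> R) : Prop := exists n, U_n n g.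

(* Main.v *)
Require Import Defs.
From HB Require Import structures.
From mathcomp Require Import all_boot all_order all_algebra.
From mathcomp Require Import all_classical all_reals all_analysis.
From mathcomp Require Import ring lra.
Import Order.TTheory GRing.Theory Num.Theory.
Import numFieldNormedType.Exports.
Local Open Scope ring_scope.
Local Open Scope classical_set_scope.

Lemma LReLU_homo (R : realType) (beta : R) : 0 < beta ->
  {homo LReLU beta : x y / x <= y}.
Proof.
move=> hb x y hxy; rewrite /LReLU.
case: ifP => hx; case: ifP => hy //.
- by exfalso; move/negbT: hy; rewrite -ltNge => hy; lra.
- move/negbT: hx; rewrite -ltNge => hx; nra.
- move/negbT: hx; rewrite -ltNge => hx; nra.
Qed.

Lemma U_n_homo (R : realType) n (f : R -> R) : U_n n f -> {homo f : x y / x <= y}.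
Proof.
elim=> {n f} [a b ha|n a beta b f ha hb hf IH] x y hxy /=.
- by rewrite lerD2r ler_pM2l.
- by rewrite lerD2r ler_pM2l //; apply: LReLU_homo => //; apply: IH.
Qed.
Arguments U_n_homo {R n f}.

Lemma U_n_aff (R : realType) n (f : R -> R) (a b : R) : 0 < a -> U_n n f ->
  U_n n (fun x => a * f x + b).
Proof.
move=> ha hf; case: hf => [a' b' ha'|n' a' beta b' f' ha' hb hf].
- have -> : (fun x => a * (a' * x + b') + b) = (fun x => (a * a') * x + (a * b' + b)).
    by apply: funext => x; ring.
  by constructor; rewrite mulr_gt0.
- have -> : (fun x => a * (a' * LReLU beta (f' x) + b') + b) =
            (fun x => (a * a') * LReLU beta (f' x) + (a * b' + b)).
    by apply: funext => x; ring.
  by constructor => //; rewrite mulr_gt0.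
Qed.

Definition Pgood (R : realType) (sigma : R -> R) (m eta x : R) : Prop :=
  m <= x /\ exists (g : R -> R) (n : nat) (c s : R), U_n n g /\ 0 < s /\
    sigma x < c < sigma x + eta /\
    (forall y, x <= y -> g y = c + s * (y - x)) /\
    (forall y, m <= y <= x -> `|sigma y - g y| <= 2 * eta).
Arguments Pgood {R}.

Lemma Pgood_base (R : realType) (sigma : R -> R) (m eta : R) :
  0 < eta -> Pgood sigma m eta m.
Proof.
move=> he; split => //.
exists (fun y => 1 * y + (sigma m + eta / 2 - m)), 0%N, (sigma m + eta / 2), 1.
split; first by constructor.
split => //; split; first by apply/andP; split; lra.
split; first by move=> y _; ring.
move=> y /andP [h1 h2]; have -> : y = m by apply/eqP; rewrite eq_le h1 h2.
have -> : sigma m - (1 * m + (sigma m + eta / 2 - m)) = - (eta / 2) by ring.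
rewrite normrN ger0_norm; lra.
Qed.

Lemma Pgood_ext (R : realType) (sigma : R -> R) (m eta x x' : R) :
  {homo sigma : x y / x <= y} -> 0 < eta ->
  Pgood sigma m eta x -> x <= x' -> sigma x' - sigma x < eta / 2 ->
  Pgood sigma m eta x'.
Proof.
move=> hs he [hmx [g [n [c [s [hg [hs0 [hc [hlin hbd]]]]]]]]] hxx' hsx.
have [<-|hne] := eqVneq x x'.
  by split => //; exists g, n, c, s.
move/andP: hc => [hc1 hc2].
have hlt : x < x' by rewrite lt_neqAle hne hxx'.
set c' := (c + sigma x' + eta) / 2.
have hsxx' : sigma x <= sigma x' by apply: hs.
have hcc' : c < c' by rewrite /c'; lra.
set s' := (c' - c) / (x' - x).
have hs'0 : 0 < s' by rewrite /s' divr_gt0 // subr_gt0.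
have hs'd : s' * (x' - x) = c' - c.
  by rewrite /s' mulrVK // unitfE subr_eq0 eq_sym.
split; first by apply: le_trans hxx'.
exists (fun y => (s' / s) * LReLU (s / s') (1 * g y + - c) + c), n.+1, c', s'.
split.
  constructor; [by rewrite divr_gt0 | by rewrite divr_gt0 | by apply: U_n_aff].
split => //.
split; first by apply/andP; split; rewrite /c'; lra.
have hright : forall y, x <= y ->
    (s' / s) * LReLU (s / s') (1 * g y + - c) + c = c + s' * (y - x).
  move=> y hy; rewrite hlin // /LReLU.
  have -> : 1 * (c + s * (y - x)) + - c = s * (y - x) by ring.
  have -> : (0 <= s * (y - x)) = true.
    by apply: mulr_ge0; [lra | lra].
  by field; rewrite gt_eqF.
split.
  move=> y hy; rewrite hright; last by apply: le_trans hy.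
  have -> : c + s' * (y - x) = c + s' * (x' - x) + s' * (y - x') by ring.
  by rewrite hs'd; ring.
move=> y /andP [hmy hyx'].
have [hyx|hxy] := leP y x.
  have -> : (s' / s) * LReLU (s / s') (1 * g y + - c) + c = g y.
    have hgx : g x = c by rewrite hlin // subrr mulr0 addr0.
    have hgy : g y <= c by rewrite -hgx; exact: (U_n_homo hg _ _ hyx).
    rewrite /LReLU; case: ifP => h0.
      have hgc : g y = c by lra.
      by rewrite hgc; ring.
    by field; try (apply/andP; split); rewrite gt_eqF.
  by apply: hbd; rewrite hmy hyx.
rewrite hright; last by apply: ltW.
have h1 : sigma x <= sigma y by apply: hs; apply: ltW.
have h2 : sigma y <= sigma x' by apply: hs.
have h3 : 0 <= s' * (y - x) by apply: mulr_ge0; lra.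
have h4 : s' * (y - x) <= s' * (x' - x) by rewrite ler_pM2l //; lra.
rewrite ler_norml; apply/andP; split; rewrite /c' in hs'd; lra.
Qed.
Arguments Pgood_ext {R sigma m eta x x'}.

Theorem mainTheorem4 (R : realType) (sigma : R -> R) (K : set R) (eps : R) :
  continuous sigma ->
  {homo sigma : x y / x <= y} ->
  compact K ->
  0 < eps ->
  exists g : R -> R, U_all g /\
    exists M : R, M < eps /\ (forall x, K x -> `|sigma x - g x| <= M).
Proof.
move=> hc hs hK heps.
have [B hB] : exists B : R, forall x, K x -> `|x| <= B.
  have := compact_bounded hK.
  move=> [M [_ hM]]; exists (M + 1) => x Kx; apply: (hM (M + 1)) => //; lra.
set Bp := `|B|.
have hBp : forall x, K x -> - Bp <= x <= Bp.
  by move=> x Kx; rewrite -ler_norml (le_trans (hB x Kx)) // ler_norm.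
have hBp0 : 0 <= Bp by rewrite normr_ge0.
set eta := eps / 4.
have heta : 0 < eta by rewrite divr_gt0.
set m := - Bp.
have hPB : Pgood sigma m eta Bp.
  set S := [set x | x <= Bp /\ Pgood sigma m eta x].
  have hS : has_sup S.
    split; first by exists m; split; [rewrite /m; lra | apply: Pgood_base].
    by exists Bp => x [].
  set z := sup S.
  have hzB : z <= Bp by apply: ge_sup; [exact: hS.1 | move=> x []].
  have [d hd hball] : exists2 d : R, 0 < d &
      forall y, `|z - y| < d -> `|sigma z - sigma y| < eta / 4.
    have := hc z; move=> /cvgrPdist_lt/(_ (eta / 4)) H.
    have /H /nbhs_ballP [d hd hb] : 0 < eta / 4 by rewrite divr_gt0.
    exists d => // y hy; apply: hb; rewrite -ball_normE /=; exact: hy.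
  have [x [hxB hPx] hzx] := sup_adherent hd hS.
  have hxz : x <= z by apply: sup_upper_bound.
  have hext : forall y, x <= y -> `|z - y| < d -> Pgood sigma m eta y.
    move=> y hxy hzy; apply: (Pgood_ext hs heta hPx hxy).
    have h1 := hball y hzy.
    have hzx2 : z - d < x := hzx.
    have h2 : `|z - x| < d by rewrite ger0_norm; lra.
    have h3 := hball x h2.
    move: h1 h3; rewrite !ltr_norml => /andP [h1 h1'] /andP [h3 h3']; lra.
  have [hBz|hBz] := leP Bp (z + d / 2).
    apply: hext; first lra.
    rewrite distrC ger0_norm; lra.
  have hPy : Pgood sigma m eta (z + d / 2).
    apply: hext; first lra.
    have -> : z - (z + d / 2) = - (d / 2) by ring.
    rewrite normrN ger0_norm; lra.
  have : z + d / 2 <= z by apply: sup_upper_bound => //; split => //; lra.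
  lra.
case: hPB => _ [g [n [c [s [hg [_ [_ [_ hbd]]]]]]]].
exists g; split; first by exists n.
exists (2 * eta); split; first by rewrite /eta; lra.
by move=> x Kx; apply: hbd; exact: hBp.
Qed.
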